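(* Let $G$ be a finite simple graph with adjacency matrix $A$ and a Godsil-McKay switching set $X$, let $Y=V(G)\setminus X$, and let $G'$ be the graph obtained from $G$ by Godsil-McKay switching with respect to $X$. Order the vertices so that \[ A=\begin{bmatrix} B & M\\ M^{\top} & C\end{bmatrix},\qquad M=\begin{bmatrix} N & J & O\end{bmatrix}, \] where $B$ is the adjacency matrix of the subgraph induced on $X$, and the columns of $N$, $J$, $O$ correspond to the vertices of $Y$ having exactly $\tfrac12|X|$, exactly $|X|$, and no neighbours in $X$, respectively. Suppose that all vertices of $X$ have the same degree in $G$, and that $\overline{\Lambda}_G=\overline{\Lambda}_{G'}$. Suppose furthermore that either (a) $B=O$ (i.e. $X$ is a coclique), $N$ has at least two columns, and no two rows of $N$ are complementary; or (b) $B$ has all row sums equal to $\tfrac12|X|$, and no two rows of the matrix $[\,B\ \ N\,]$ are complementary. Let $H$ be a finite simple graph and $i$ a vertex of $H$. Then $\{i\}\times X$ is a Godsil-McKay switching set both in $H\times G$ and in $H\boxtimes G$. Moreover, if $i$ has degree at least one in $H$, then Godsil-McKay switching in $H\boxtimes G$ with respect to $\{i\}\times X$ yields a graph that is cospectral with but not isomorphic to $H\boxtimes G$; and if $i$ is adjacent in $H$ to a vertex of degree at least two, then Godsil-McKay switching in $H\times G$ with respect to $\{i\}\times X$ yields a graph that is cospectral with but not isomorphic to $H\times G$.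
   Context: A subset $X$ of the vertex set of a graph $G$ is a (Godsil-McKay) switching set if $X$ induces a regular subgraph of $G$ and every vertex outside $X$ has either $0$, $\tfrac12|X|$ or $|X|$ neighbours in $X$. Godsil-McKay switching with respect to $X$ produces the graph $G'$ on the same vertex set obtained as follows: for each vertex $x\notin X$ having exactly $\tfrac12|X|$ neighbours in $X$, delete the edges from $x$ to these neighbours and join $x$ instead to the other $\tfrac12|X|$ vertices of $X$; all other adjacencies are unchanged. For a graph $\Gamma$ and vertices $x,y$, $\lambda_\Gamma(x,y)$ is the number of common neighbours of $x$ and $y$; $\overline{\Lambda}_G$ denotes the multiset $\{\lambda_G(x,y)\mid x\in X,\ y\in Y\}$ and $\overline{\Lambda}_{G'}=\{\lambda_{G'}(x,y)\mid x\in X,\ y\in Y\}$. Two rows of a $(0,1)$-matrix are complementary if their sum is the all-ones row. Two graphs are cospectral if their adjacency matrices have the same spectrum. If $H$ has adjacency matrix $E$, the tensor product $H\times G$ is the graph on $V(H)\times V(G)$ with adjacency matrix $E\otimes A$ (i.e. $(j,x)\sim(k,y)$ iff $j\sim k$ in $H$ and $x\sim y$ in $G$), and the strengthened tensor product $H\boxtimes G$ is the graph on $V(H)\times V(G)$ with adjacency matrix $(E+I)\otimes A$ (i.e. $(j,x)\sim(k,y)$ iff ($j=k$ or $j\sim k$ in $H$) and $x\sim y$ in $G$). *)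

(* Defs.v *)
From mathcomp Require Import all_boot all_order all_algebra all_fingroup all_field.
Set Implicit Arguments. Unset Strict Implicit. Unset Printing Implicit Defensive.
Import GRing.Theory Num.Theory.
Local Open Scope ring_scope.

Definition simple_graph (T : finType) (e : rel T) : Prop :=
  symmetric e /\ irreflexive e.

Definition deg (T : finType) (e : rel T) (x : T) : nat := #|[set y | e x y]|.

Definition degIn (T : finType) (e : rel T) (X : {set T}) (v : T) : nat :=
  #|[set y in X | e v y]|.

Definition lambda (T : finType) (e : rel T) (x y : T) : nat :=
  #|[set z | e x z && e y z]|.

Definition gm_switching_set (T : finType) (e : rel T) (X : {set T}) : Prop :=
  (exists k, forall x, x \in X -> degIn e X x = k) /\
  (forall v, v \notin X ->
     [|| degIn e X v == 0%N, (2 * degIn e X v == #|X|)%N | degIn e X v == #|X|]).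

(* vertices outside X with exactly |X|/2 neighbours in X (columns of N) *)
Definition half_set (T : finType) (e : rel T) (X : {set T}) : {set T} :=
  [set v | (v \notin X) && (2 * degIn e X v == #|X|)%N].

Definition gm_switch (T : finType) (e : rel T) (X : {set T}) : rel T :=
  fun u v =>
    if ((u \in X) && (v \in half_set e X)) || ((v \in X) && (u \in half_set e X))
    then ~~ e u v else e u v.

Definition tensor_graph (U T : finType) (eH : rel U) (eG : rel T) : rel (U * T) :=
  fun p q => eH p.1 q.1 && eG p.2 q.2.

Definition strong_tensor_graph (U T : finType) (eH : rel U) (eG : rel T)
  : rel (U * T) :=
  fun p q => ((p.1 == q.1) || eH p.1 q.1) && eG p.2 q.2.

Definition adjmx (T : finType) (e : rel T) : 'M[algC]_#|T| :=
  \matrix_(i, j) (e (enum_val i) (enum_val j))%:R.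

(* Cospectral: same spectrum (with multiplicities) of the adjacency matrices,
   i.e. equal characteristic polynomials over the algebraically closed algC. *)
Definition cospectral (T : finType) (e e' : rel T) : Prop :=
  char_poly (adjmx e) = char_poly (adjmx e').

Definition isomorphic (T : finType) (e e' : rel T) : Prop :=
  exists f : {perm T}, forall u v, e u v = e' (f u) (f v).

Definition Lambda_list (T : finType) (e : rel T) (X : {set T}) : seq nat :=
  [seq lambda e x y | x <- enum X, y <- enum (~: X)].

(* Main.v *)
Require Import Defs.
From mathcomp Require Import all_boot all_order all_algebra all_fingroup all_field.
From mathcomp Require Import zify ring.
Set Implicit Arguments. Unset Strict Implicit. Unset Printing Implicit Defensive.




Lemma card_sum (T : finType) (P : pred T) : #|[set y | P y]| = \sum_y P y.
Proof.
rewrite -sum1_card big_mkcond /=; apply: eq_bigr => y _; rewrite inE.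
by case: (P y).
Qed.

Lemma lamE (T : finType) (e : rel T) p q : lambda e p q = \sum_z (e p z && e q z).
Proof. by rewrite /lambda card_sum. Qed.

Lemma degE (T : finType) (e : rel T) x : deg e x = \sum_z e x z.
Proof. by rewrite /deg card_sum. Qed.

Lemma degInE (T : finType) (e : rel T) (X : {set T}) v :
  degIn e X v = \sum_(y in X) e v y.
Proof.
rewrite /degIn -sum1_card [RHS]big_mkcond [LHS]big_mkcond /=.
by apply: eq_bigr => y _; rewrite inE; case: (y \in X); case: (e v y).
Qed.

Lemma lam_sym (T : finType) (e : rel T) p q : lambda e p q = lambda e q p.
Proof. by rewrite !lamE; apply: eq_bigr => z _; rewrite andbC. Qed.

Lemma sum_andC (T : finType) (A : {set T}) (a b : pred T) :
  \sum_(w in A) (a w && b w) + \sum_(w in A) (a w && ~~ b w) = \sum_(w in A) a w.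
Proof. by rewrite -big_split; apply: eq_bigr => w _; case: (a w); case: (b w). Qed.

Lemma sum_negb (T : finType) (A : {set T}) (a : pred T) :
  \sum_(w in A) a w + \sum_(w in A) ~~ a w = #|A|.
Proof.
by rewrite -big_split -sum1_card; apply: eq_bigr => w _; case: (a w).
Qed.

Lemma sum_nn (T : finType) (A : {set T}) (a b : pred T) :
  \sum_(w in A) (~~ a w && ~~ b w) + \sum_(w in A) a w + \sum_(w in A) b w
  = #|A| + \sum_(w in A) (a w && b w).
Proof.
rewrite -!big_split -sum1_card -big_split; apply: eq_bigr => w _.
by case: (a w); case: (b w).
Qed.

Lemma sum_full (T : finType) (A : {set T}) (b : pred T) :
  \sum_(w in A) b w = #|A| -> forall z, z \in A -> b z.
Proof.
move=> H z zA; apply/negPn/negP => nb.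
have : \sum_(w in A) b w < #|A|.
  rewrite -sum1_card (bigD1 z) //= [X in _ < X](bigD1 z) //= (negbTE nb) add0n.
  by rewrite add1n ltnS; apply: leq_sum => i _; case: (b i).
by rewrite H ltnn.
Qed.

Lemma sum_zero (T : finType) (A : {set T}) (b : pred T) :
  \sum_(w in A) b w = 0 -> forall z, z \in A -> ~~ b z.
Proof.
move=> H z zA; apply/negP => bz.
have : 0 < \sum_(w in A) b w by rewrite (bigD1 z) //= bz.
by rewrite H.
Qed.

Lemma sum_ge1 (T : finType) (A : {set T}) (b : pred T) z :
  z \in A -> b z -> 0 < \sum_(w in A) b w.
Proof. by move=> zA bz; rewrite (bigD1 z) //= bz. Qed.

Lemma sw_out (T : finType) (e : rel T) (S : {set T}) (p z : T) : p \notin S -> z \in S ->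
  gm_switch e S p z = e p z (+) (p \in half_set e S).
Proof.
move=> pS zS; rewrite /gm_switch (negbTE pS) zS /=.
by case: (p \in half_set e S); case: (e p z).
Qed.

Lemma half_notin (T : finType) (e : rel T) (S : {set T}) (p : T) : p \in half_set e S -> p \notin S.
Proof. by rewrite inE => /andP[]. Qed.

Lemma sw_in (T : finType) (e : rel T) (S : {set T}) (p z : T) : p \in S ->
  gm_switch e S p z = e p z (+) (z \in half_set e S).
Proof.
move=> pS; have hp : (p \in half_set e S) = false.
  by apply/negP => /half_notin; rewrite pS.
rewrite /gm_switch pS hp andbF orbF /=.
by case: (z \in half_set e S); case: (e p z).
Qed.

Lemma sw_outout (T : finType) (e : rel T) (S : {set T}) (p z : T) : p \notin S -> z \notin S ->
  gm_switch e S p z = e p z.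
Proof. by move=> pS zS; rewrite /gm_switch (negbTE pS) (negbTE zS). Qed.

Lemma lam_outout (T : finType) (e : rel T) (S : {set T}) (p q : T) :
  gm_switching_set e S -> p \notin S -> q \notin S ->
  lambda (gm_switch e S) p q = lambda e p q.
Proof.
move=> [_ HS] pS qS; rewrite !lamE (bigID (fun z => z \in S)) [RHS](bigID (fun z => z \in S)) /=.
congr (_ + _); last first.
  by apply: eq_bigr => z zS; rewrite !sw_outout.
have -> : \sum_(z in S) (gm_switch e S p z && gm_switch e S q z) =
   \sum_(z in S) ((e p z (+) (p \in half_set e S)) && (e q z (+) (q \in half_set e S))).
  by apply: eq_bigr => z zS; rewrite !sw_out.
have Hdeg v : v \notin S -> v \notin half_set e S ->
   (forall z, z \in S -> ~~ e v z) \/ (forall z, z \in S -> e v z).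
  move=> vS vH; move: (HS v vS); rewrite inE vS /= in vH.
  case/or3P => [/eqP H| H |/eqP H]; first by left; apply: sum_zero; rewrite -degInE.
    by rewrite H in vH.
  by right; apply: sum_full; rewrite -degInE.
have Hhalf v : v \in half_set e S -> 2 * \sum_(z in S) e v z = #|S|.
  by rewrite inE -degInE => /andP[_ /eqP].
case hp: (p \in half_set e S); case hq: (q \in half_set e S).
- have -> : \sum_(z in S) ((e p z (+) true) && (e q z (+) true)) =
            \sum_(z in S) (~~ e p z && ~~ e q z) by apply: eq_bigr => z _; rewrite !addbT.
  have := sum_nn S (e p) (e q); have := Hhalf _ hp; have := Hhalf _ hq. lia.
- have -> : \sum_(z in S) ((e p z (+) true) && (e q z (+) false)) =
            \sum_(z in S) (~~ e p z && e q z) by apply: eq_bigr => z _; rewrite addbT addbF.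
  case: (Hdeg q qS (negbT hq)) => Hq.
  + rewrite !big1 // => z zS; by rewrite (negbTE (Hq z zS)) andbF.
  + have -> : \sum_(z in S) (~~ e p z && e q z) = \sum_(z in S) ~~ e p z.
      by apply: eq_bigr => z zS; rewrite Hq ?andbT.
    have -> : \sum_(z in S) (e p z && e q z) = \sum_(z in S) e p z.
      by apply: eq_bigr => z zS; rewrite Hq ?andbT.
    have := sum_negb S (e p); have := Hhalf _ hp. lia.
- have -> : \sum_(z in S) ((e p z (+) false) && (e q z (+) true)) =
            \sum_(z in S) (e p z && ~~ e q z) by apply: eq_bigr => z _; rewrite addbT addbF.
  case: (Hdeg p pS (negbT hp)) => Hp.
  + rewrite !big1 // => z zS; by rewrite (negbTE (Hp z zS)).
  + have -> : \sum_(z in S) (e p z && ~~ e q z) = \sum_(z in S) ~~ e q z.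
      by apply: eq_bigr => z zS; rewrite Hp.
    have -> : \sum_(z in S) (e p z && e q z) = \sum_(z in S) e q z.
      by apply: eq_bigr => z zS; rewrite Hp.
    have := sum_negb S (e q); have := Hhalf _ hq. lia.
- by apply: eq_bigr => z _; rewrite !addbF.
Qed.

Lemma lam_inin (T : finType) (e : rel T) (S : {set T}) (p q : T) :
  (forall s, s \in S -> 2 * \sum_(z in half_set e S) e s z = #|half_set e S|) ->
  p \in S -> q \in S ->
  lambda (gm_switch e S) p q = lambda e p q.
Proof.
move=> HH pS qS.
rewrite !lamE (bigID (fun z => z \in half_set e S)) [RHS](bigID (fun z => z \in half_set e S)) /=.
congr (_ + _); last first.
  by apply: eq_bigr => z zH; rewrite !sw_in // (negbTE zH) !addbF.
have -> : \sum_(z in half_set e S) (gm_switch e S p z && gm_switch e S q z) =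
          \sum_(z in half_set e S) (~~ e p z && ~~ e q z).
  by apply: eq_bigr => z zH; rewrite !sw_in // zH !addbT.
have := sum_nn (half_set e S) (e p) (e q); have := HH _ pS; have := HH _ qS. lia.
Qed.

Definition cnt (T : finType) (t : nat) (e : rel T) : nat :=
  \sum_p \sum_q (t <= lambda e p q).

Lemma lam_perm (T : finType) (e e' : rel T) (f : {perm T}) :
  (forall u v, e u v = e' (f u) (f v)) ->
  forall u v, lambda e' (f u) (f v) = lambda e u v.
Proof.
move=> Hf u v; rewrite !lamE (reindex_inj (@perm_inj _ f)) /=.
by apply: eq_bigr => z _; rewrite -!Hf.
Qed.

Lemma cnt_iso (T : finType) t (e e' : rel T) : isomorphic e e' -> cnt t e = cnt t e'.
Proof.
move=> [f Hf]; rewrite /cnt [RHS](reindex_inj (@perm_inj _ f)) /=.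
apply: eq_bigr => p _; rewrite [RHS](reindex_inj (@perm_inj _ f)) /=.
by apply: eq_bigr => q _; rewrite (lam_perm Hf).
Qed.

Lemma cnt_split (T : finType) t (e : rel T) (S : {set T}) :
  cnt t e = \sum_(p in S) \sum_(q in S) (t <= lambda e p q)
          + 2 * \sum_(p in S) \sum_(q | q \notin S) (t <= lambda e p q)
          + \sum_(p | p \notin S) \sum_(q | q \notin S) (t <= lambda e p q).
Proof.
rewrite /cnt (bigID (fun p => p \in S)) /=.
rewrite [X in X + _](eq_bigr (fun p => \sum_(q in S) (t <= lambda e p q) + \sum_(q | q \notin S) (t <= lambda e p q))); last by move=> p _; rewrite (bigID (fun q => q \in S)).
rewrite [X in _ + X](eq_bigr (fun p => \sum_(q in S) (t <= lambda e p q) + \sum_(q | q \notin S) (t <= lambda e p q))); last by move=> p _; rewrite (bigID (fun q => q \in S)).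
rewrite !big_split /=.
have -> : \sum_(p | p \notin S) \sum_(q in S) (t <= lambda e p q) =
          \sum_(p in S) \sum_(q | q \notin S) (t <= lambda e p q).
  rewrite exchange_big /=; apply: eq_bigr => p _; apply: eq_bigr => q _.
  by rewrite lam_sym.
lia.
Qed.

Lemma cnt_lt (T : finType) t (e e' : rel T) (S : {set T}) :
  (forall p q, p \in S -> q \in S -> lambda e' p q = lambda e p q) ->
  (forall p q, p \notin S -> q \notin S -> lambda e' p q = lambda e p q) ->
  \sum_(p in S) \sum_(q | q \notin S) (t <= lambda e' p q) <
  \sum_(p in S) \sum_(q | q \notin S) (t <= lambda e p q) ->
  cnt t e' < cnt t e.
Proof.
move=> H1 H2 H3; rewrite (cnt_split t e S) (cnt_split t e' S).
have -> : \sum_(p in S) \sum_(q in S) (t <= lambda e' p q) =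
          \sum_(p in S) \sum_(q in S) (t <= lambda e p q).
  by apply: eq_bigr => p pS; apply: eq_bigr => q qS; rewrite H1.
have -> : \sum_(p | p \notin S) \sum_(q | q \notin S) (t <= lambda e' p q) =
          \sum_(p | p \notin S) \sum_(q | q \notin S) (t <= lambda e p q).
  by apply: eq_bigr => p pS; apply: eq_bigr => q qS; rewrite H2.
lia.
Qed.


Definition prodg (U T : finType) (h : rel U) (e : rel T) : rel (U * T) :=
  fun p q => h p.1 q.1 && e p.2 q.2.

Definition mu (U : finType) (h : rel U) (a b : U) : nat := \sum_c (h a c && h b c).

Definition Wset (T : finType) (e : rel T) (X : {set T}) : {set T} :=
  [set v | (2 * degIn e X v == #|X|)%N].

Definition kap (T : finType) (e : rel T) (X : {set T}) (x v : T) : nat :=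
  \sum_w ((e x w (+) (w \in Wset e X)) && e v w).

Lemma sum_pair (U T : finType) (F : U * T -> nat) :
  \sum_z F z = \sum_c \sum_w F (c, w).
Proof. by rewrite pair_bigA; apply: eq_bigr => -[c w]. Qed.

Lemma sum_S (U T : finType) (i : U) (X : {set T}) (F : U * T -> nat) :
  \sum_(y in setX [set i] X) F y = \sum_(x in X) F (i, x).
Proof.
rewrite big_mkcond sum_pair (bigD1 i) //= [X in _ + X]big1 ?addn0.
  rewrite [RHS]big_mkcond; apply: eq_bigr => w _.
  by rewrite in_setX in_set1 eqxx.
move=> c /negbTE ci; rewrite big1 // => w _.
by rewrite in_setX in_set1 ci.
Qed.

Lemma inS (U T : finType) (i : U) (X : {set T}) c w :
  ((c, w) \in setX [set i] X) = (c == i) && (w \in X).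
Proof. by rewrite in_setX in_set1. Qed.

Lemma cardS (U T : finType) (i : U) (X : {set T}) : #|setX [set i] X| = #|X|.
Proof. by rewrite cardsX cards1 mul1n. Qed.

Lemma lamP (U T : finType) (h : rel U) (e : rel T) a u b v :
  lambda (prodg h e) (a, u) (b, v) = mu h a b * lambda e u v.
Proof.
rewrite !lamE sum_pair /mu big_distrl; apply: eq_bigr => c _.
rewrite big_distrr; apply: eq_bigr => w _ /=.
by rewrite /prodg /=; case: (h a c); case: (h b c); case: (e u w); case: (e v w).
Qed.

Lemma degInP (U T : finType) (h : rel U) (e : rel T) (i : U) (X : {set T}) c w :
  degIn (prodg h e) (setX [set i] X) (c, w) = h c i * degIn e X w.
Proof.
rewrite !degInE sum_S big_distrr; apply: eq_bigr => x _ /=.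
by rewrite /prodg /=; case: (h c i); case: (e w x).
Qed.

Lemma halfP (U T : finType) (h : rel U) (e : rel T) (i : U) (X : {set T}) c w :
  (0 < #|X|)%N ->
  ((c, w) \in half_set (prodg h e) (setX [set i] X)) =
  ~~ ((c == i) && (w \in X)) && h c i && (w \in Wset e X).
Proof.
move=> Xp; rewrite inE inS degInP cardS inE.
case: (h c i); rewrite ?mul1n ?andbT ?andbF //= muln0.
have -> : (0 == #|X|) = false by apply/eqP => H; rewrite -H in Xp.
by rewrite andbF.
Qed.

Lemma gmP (U T : finType) (h : rel U) (e : rel T) (i : U) (X : {set T}) :
  (exists k, forall x, x \in X -> degIn e X x = k) ->
  (forall w, [|| degIn e X w == 0, (2 * degIn e X w == #|X|)%N | degIn e X w == #|X|]) ->
  gm_switching_set (prodg h e) (setX [set i] X).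
Proof.
move=> [k Hk] TRI; split.
  exists (h i i * k) => -[c x]; rewrite inS => /andP[/eqP -> xX].
  by rewrite degInP Hk.
move=> [c w] _; rewrite degInP cardS.
case: (h c i); rewrite ?mul1n ?mul0n ?eqxx //.
Qed.

Lemma swP_p (U T : finType) (h : rel U) (e : rel T) (i : U) (X : {set T}) x c w :
  (0 < #|X|)%N -> x \in X ->
  gm_switch (prodg h e) (setX [set i] X) (i, x) (c, w) =
  (h i c && e x w) (+) (~~ ((c == i) && (w \in X)) && h c i && (w \in Wset e X)).
Proof.
move=> Xp xX; rewrite sw_in ?inS ?eqxx // halfP //.
Qed.

Lemma swP_q (U T : finType) (h : rel U) (e : rel T) (i : U) (X : {set T}) b v c w :
  (0 < #|X|)%N -> (b, v) \notin setX [set i] X ->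
  gm_switch (prodg h e) (setX [set i] X) (b, v) (c, w) =
  (h b c && e v w) (+) (((c == i) && (w \in X)) && h b i && (v \in Wset e X)).
Proof.
move=> Xp bvS.
case cwS: ((c, w) \in setX [set i] X).
  rewrite sw_out // halfP // ?cwS; move: cwS; rewrite inS => -> /=.
  by move: bvS; rewrite inS => -> /=.
rewrite sw_outout ?cwS //; move: cwS; rewrite inS => ->.
by rewrite /= addbF.
Qed.

Definition F0 (T : finType) (e : rel T) (X : {set T}) (x v : T) : nat :=
  \sum_w ((e x w (+) ((w \notin X) && (w \in Wset e X))) &&
          (e v w (+) ((w \in X) && (v \in Wset e X)))).

Lemma F0_kap (T : finType) (e : rel T) (X : {set T}) x v :
  \sum_(w in X) (e x w && (e v w (+) (v \in Wset e X))) =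
  \sum_(w in X) ((e x w (+) (w \in Wset e X)) && e v w) ->
  F0 e X x v = kap e X x v.
Proof.
move=> ID; rewrite /F0 /kap (bigID (fun w => w \in X)) [RHS](bigID (fun w => w \in X)) /=.
congr (_ + _).
  rewrite -[RHS]ID; apply: eq_bigr => w wX; rewrite wX /=.
  by rewrite addbF.
by apply: eq_bigr => w /negbTE wX; rewrite wX /= addbF.
Qed.

Lemma lam_G' (T : finType) (e : rel T) (X : {set T}) x v :
  x \in X -> v \notin X -> lambda (gm_switch e X) x v = F0 e X x v.
Proof.
move=> xX vX; rewrite lamE /F0; apply: eq_bigr => w _.
rewrite sw_in // inE.
case wX: (w \in X).
  rewrite sw_out // inE vX /=.
  congr (_ && (_ (+) _)); by rewrite /Wset inE.
rewrite sw_outout ?wX //= addbF.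
by rewrite /Wset inE.
Qed.

Lemma lam_swP (U T : finType) (h : rel U) (e : rel T) (i : U) (X : {set T}) x b v :
  symmetric h -> (0 < #|X|)%N -> x \in X -> (b, v) \notin setX [set i] X ->
  \sum_(w in X) (e x w && (e v w (+) (v \in Wset e X))) =
  \sum_(w in X) ((e x w (+) (w \in Wset e X)) && e v w) ->
  lambda (gm_switch (prodg h e) (setX [set i] X)) (i, x) (b, v) = mu h i b * kap e X x v.
Proof.
move=> hs Xp xX bvS ID.
rewrite lamE sum_pair /mu big_distrl /=.
rewrite (bigD1 i) //= [RHS](bigD1 i) //=; congr (_ + _).
  rewrite -(F0_kap ID) /F0 big_distrr /=; apply: eq_bigr => w _.
  rewrite swP_p // swP_q // eqxx /= (hs b i).
  by case: (h i i); case: (h i b); case: (e x w); case: (e v w); case: (w \in X);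
    case: (w \in Wset e X); case: (v \in Wset e X).
apply: eq_bigr => c /negbTE ci; rewrite /kap big_distrr /=; apply: eq_bigr => w _.
rewrite swP_p // swP_q // ci /= (hs c i).
by case: (h i c); case: (h b c); case: (e x w); case: (e v w);
    case: (w \in Wset e X).
Qed.

Lemma card_sumb (T : finType) (A : {set T}) : #|A| = \sum_z (z \in A).
Proof. by rewrite -sum1_card big_mkcond /=; apply: eq_bigr => z _; case: (z \in A). Qed.

Lemma sum_inb (T : finType) (A : {set T}) (b : pred T) :
  \sum_(z in A) b z = \sum_z ((z \in A) && b z).
Proof. by rewrite big_mkcond /=; apply: eq_bigr => z _; case: (z \in A). Qed.

Lemma halfdegP (U T : finType) (h : rel U) (e : rel T) (i : U) (X : {set T}) :
  symmetric h -> (0 < #|X|)%N ->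
  (forall x, x \in X -> 2 * \sum_w ((w \in Wset e X) && e x w) = \sum_w (w \in Wset e X)) ->
  (forall x, x \in X -> 2 * \sum_w ((w \notin X) && (w \in Wset e X) && e x w) =
                        \sum_w ((w \notin X) && (w \in Wset e X))) ->
  forall s, s \in setX [set i] X ->
   2 * \sum_(z in half_set (prodg h e) (setX [set i] X)) prodg h e s z =
   #|half_set (prodg h e) (setX [set i] X)|.
Proof.
move=> hs Xp L1 L2 [c0 x]; rewrite inS => /andP[/eqP -> xX].
rewrite sum_inb card_sumb !sum_pair big_distrr; apply: eq_bigr => c _.
rewrite big_distrr.
case hic: (h i c); last first.
  by rewrite !big1 // => w _; rewrite halfP // (hs c i) hic ?andbF /= ?andbF ?muln0.
case: (c =P i) => [E|/eqP ci].
  rewrite E in hic *.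
  transitivity (2 * \sum_w ((w \notin X) && (w \in Wset e X) && e x w)).
    rewrite [RHS]big_distrr; apply: eq_bigr => w _; rewrite halfP // eqxx.
    by rewrite /prodg /= hic !andbT.
  rewrite L2 //; apply: eq_bigr => w _; rewrite halfP // eqxx hic /=.
  by rewrite andbT.
transitivity (2 * \sum_w ((w \in Wset e X) && e x w)).
  rewrite [RHS]big_distrr; apply: eq_bigr => w _; rewrite halfP // (negbTE ci) (hs c i) hic /=.
  by rewrite /prodg /= hic.
rewrite L1 //; apply: eq_bigr => w _; rewrite halfP // (negbTE ci) (hs c i) hic /=.
by [].
Qed.

Lemma count_sum (T : eqType) (a : pred T) (s : seq T) :
  count a s = \sum_(l <- s) a l.
Proof. by elim: s => [|x s IH]; rewrite ?big_nil ?big_cons //= IH. Qed.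

Lemma count_Lambda (T : finType) (G : rel T) (X : {set T}) (a : pred nat) :
  count a (Lambda_list G X) = \sum_(x in X) \sum_w ((w \notin X) && a (lambda G x w)).
Proof.
rewrite /Lambda_list count_sum big_allpairs_dep big_enum /=; apply: eq_bigr => x _.
rewrite big_enum sum_inb /=; apply: eq_bigr => w _.
by rewrite in_setC.
Qed.

Lemma lam_diag (T : finType) (e : rel T) x : lambda e x x = deg e x.
Proof. by rewrite lamE degE; apply: eq_bigr => z _; rewrite andbb. Qed.

Lemma SSc_form (U T : finType) (G : rel (U * T)) (i : U) (X : {set T}) (f : nat -> bool) :
  \sum_(p in setX [set i] X) \sum_(q | q \notin setX [set i] X) f (lambda G p q) =
  \sum_(x in X) \sum_c \sum_w (~~ ((c == i) && (w \in X)) && f (lambda G (i, x) (c, w))).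
Proof.
rewrite sum_S; apply: eq_bigr => x _.
rewrite big_mkcond sum_pair; apply: eq_bigr => c _; apply: eq_bigr => w _.
by rewrite inS; case: (~~ _).
Qed.

Lemma Phi_split (U T : finType) (X : {set T}) (i : U) (F : T -> U -> T -> bool) :
  \sum_(x in X) \sum_c \sum_w (~~ ((c == i) && (w \in X)) && F x c w) =
  \sum_c \sum_(x in X) \sum_w ((w \notin X) && F x c w) +
  \sum_(x in X) \sum_c \sum_w ((w \in X) && (c != i) && F x c w).
Proof.
rewrite exchange_big [X in _ = _ + X]exchange_big /= -big_split /=; apply: eq_bigr => c _.
rewrite -big_split /=; apply: eq_bigr => x _.
rewrite -big_split /=; apply: eq_bigr => w _.
by case: (c == i); case: (w \in X); case: (F x c w).
Qed.

Lemma sum_ge_term (I : finType) (P : pred I) (F : I -> nat) i0 :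
  P i0 -> F i0 <= \sum_(i | P i) F i.
Proof. by move=> Pi; rewrite (bigD1 i0) //= leq_addr. Qed.

Lemma prod_noniso (U T : finType) (h : rel U) (e : rel T) (i : U) (X : {set T}) :
  symmetric h -> (0 < #|X|)%N ->
  (exists k, forall x, x \in X -> degIn e X x = k) ->
  (forall w, [|| degIn e X w == 0, (2 * degIn e X w == #|X|)%N | degIn e X w == #|X|]) ->
  (forall x, x \in X -> 2 * \sum_w ((w \in Wset e X) && e x w) = \sum_w (w \in Wset e X)) ->
  (forall x, x \in X -> 2 * \sum_w ((w \notin X) && (w \in Wset e X) && e x w) =
                        \sum_w ((w \notin X) && (w \in Wset e X))) ->
  (forall x v, x \in X ->
     \sum_(w in X) (e x w && (e v w (+) (v \in Wset e X))) =
     \sum_(w in X) ((e x w (+) (w \in Wset e X)) && e v w)) ->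
  (forall x v, x \in X -> v \in X -> kap e X x v < deg e v) ->
  (forall x1 x2, x1 \in X -> x2 \in X -> deg e x1 = deg e x2) ->
  perm_eq (Lambda_list e X) (Lambda_list (gm_switch e X) X) ->
  (exists b, (b != i) && (0 < mu h i b)) ->
  ~ isomorphic (prodg h e) (gm_switch (prodg h e) (setX [set i] X)).
Proof.
move=> hs Xp Kreg TRI L1 L2 ID KB Hdeg HL [b0 /andP[b0i b0p]] Hiso.
set S := setX [set i] X.
have GM : gm_switching_set (prodg h e) S by apply: gmP.
have [x0 x0X] : exists x0, x0 \in X by apply/card_gt0P.
set D := deg e x0.
have cp : 0 < #|[pred b | b != i]| by apply/card_gt0P; exists b0.
have [bs bsi HM] := eq_bigmax_cond (mu h i) cp.
set M := mu h i bs.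
have muM c : c != i -> mu h i c <= M.
  by move=> ci; rewrite /M -HM; apply: leq_bigmax_cond; rewrite inE.
rewrite inE in bsi.
have Mpos : 0 < M by apply: leq_trans b0p (muM _ b0i).
set t := M * D.
have := cnt_iso t Hiso; apply/eqP; rewrite neq_ltn; apply/orP; right.
apply: (cnt_lt (S := S)).
- move=> p q pS qS; apply: lam_inin => //.
  exact: halfdegP.
- by move=> p q pS qS; apply: lam_outout.
rewrite !SSc_form.
have -> : \sum_(x in X) \sum_c \sum_w (~~ ((c == i) && (w \in X)) &&
      (t <= lambda (gm_switch (prodg h e) S) (i, x) (c, w))) =
    \sum_(x in X) \sum_c \sum_w (~~ ((c == i) && (w \in X)) && (t <= mu h i c * kap e X x w)).
  apply: eq_bigr => x xX; apply: eq_bigr => c _; apply: eq_bigr => w _.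
  case cw: (~~ ((c == i) && (w \in X))) => //=.
  rewrite lam_swP // ?ID //.
  by rewrite inS cw.
have -> : \sum_(x in X) \sum_c \sum_w (~~ ((c == i) && (w \in X)) &&
      (t <= lambda (prodg h e) (i, x) (c, w))) =
    \sum_(x in X) \sum_c \sum_w (~~ ((c == i) && (w \in X)) && (t <= mu h i c * lambda e x w)).
  by apply: eq_bigr => x xX; apply: eq_bigr => c _; apply: eq_bigr => w _; rewrite lamP.
rewrite !(Phi_split X i (fun x c w => t <= mu h i c * _)).
have -> : \sum_c \sum_(x in X) \sum_w ((w \notin X) && (t <= mu h i c * kap e X x w)) =
          \sum_c \sum_(x in X) \sum_w ((w \notin X) && (t <= mu h i c * lambda e x w)).
  apply: eq_bigr => c _.
  have E1 := count_Lambda e X (fun l => t <= mu h i c * l).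
  have E2 := count_Lambda (gm_switch e X) X (fun l => t <= mu h i c * l).
  rewrite -E1 (seq.permP HL) E2; apply: eq_bigr => x xX; apply: eq_bigr => w _.
  case wX: (w \in X) => //=.
  by rewrite lam_G' ?wX // F0_kap // ID.
have -> : \sum_(x in X) \sum_c \sum_w ((w \in X) && (c != i) && (t <= mu h i c * kap e X x w)) = 0.
  apply: big1 => x xX; apply: big1 => c _; apply: big1 => w _.
  case wX: (w \in X) => //=; case ci: (c != i) => //=.
  suff -> : (t <= mu h i c * kap e X x w) = false by [].
  apply/negbTE; rewrite -ltnNge.
  have k1 := KB x w xX wX; rewrite (Hdeg w x0 wX x0X) -/D in k1.
  have m1 := muM c ci.
  rewrite /t; nia.
rewrite addn0 -[X in X < _]addn0 ltn_add2l.
apply: (leq_trans _ (sum_ge_term _ x0X)).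
apply: (leq_trans _ (sum_ge_term _ (isT : predT bs))).
apply: (leq_trans _ (sum_ge_term _ (isT : predT x0))).
by rewrite x0X bsi /= lam_diag /t /M /D leqnn.
Qed.


Lemma exists_of_sum (T : finType) (b : pred T) : 0 < \sum_z b z -> exists z, b z.
Proof.
move=> H; case: (boolP [exists z, b z]) => [/existsP //|/existsPn Hn].
by move: H; rewrite big1 // => z _; rewrite (negbTE (Hn z)).
Qed.

Lemma W_out (T : finType) (e : rel T) (X : {set T}) :
  symmetric e -> (0 < #|X|)%N ->
  (forall w, [|| degIn e X w == 0, (2 * degIn e X w == #|X|)%N | degIn e X w == #|X|]) ->
  forall x w, x \in X -> w \notin Wset e X -> e x w = (degIn e X w == #|X|).
Proof.
move=> es Xp TRI x w xX; rewrite inE => wW.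
case/or3P: (TRI w) => [/eqP H| H |/eqP H]; last first.
- by rewrite H eqxx es; apply: (sum_full (A := X)) => //; rewrite -degInE.
- by rewrite H in wW.
rewrite H es; have := sum_zero (A := X) (b := e w); rewrite -degInE => /(_ H x xX) /negbTE ->.
by case: eqP => // E; rewrite -E in Xp.
Qed.

Lemma W_count (T : finType) (e : rel T) (X : {set T}) :
  symmetric e -> (0 < #|X|)%N ->
  (forall w, [|| degIn e X w == 0, (2 * degIn e X w == #|X|)%N | degIn e X w == #|X|]) ->
  (forall x1 x2, x1 \in X -> x2 \in X -> deg e x1 = deg e x2) ->
  forall x, x \in X -> 2 * \sum_w ((w \in Wset e X) && e x w) = \sum_w (w \in Wset e X).
Proof.
move=> es Xp TRI Hdeg.
set c := \sum_w ((w \notin Wset e X) && (degIn e X w == #|X|)).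
have Hs x : x \in X -> \sum_w ((w \in Wset e X) && e x w) + c = deg e x.
  move=> xX; rewrite degE [RHS](bigID (fun w => w \in Wset e X)) /=.
  have -> : \sum_(w | w \notin Wset e X) e x w =
            \sum_(w | w \notin Wset e X) (degIn e X w == #|X|).
    by apply: eq_bigr => w wW; rewrite (W_out es Xp TRI xX wW).
  rewrite /c; congr (_ + _).
    by rewrite [RHS]big_mkcond /=; apply: eq_bigr => w _; case: (w \in _).
  by rewrite [RHS]big_mkcond /=; apply: eq_bigr => w _; case: (w \in _).
have [x0 x0X] : exists x0, x0 \in X by apply/card_gt0P.
set s := \sum_w ((w \in Wset e X) && e x0 w).
have Hc x : x \in X -> \sum_w ((w \in Wset e X) && e x w) = s.
  move=> xX; have := Hs x xX; have := Hs x0 x0X; rewrite (Hdeg x x0) //. lia.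
have dc : \sum_(x in X) \sum_w ((w \in Wset e X) && e x w) = #|X| * s.
  by rewrite -sum1_card big_distrl /=; apply: eq_bigr => x xX; rewrite Hc // mul1n.
have dc2 : 2 * \sum_(x in X) \sum_w ((w \in Wset e X) && e x w) = #|X| * \sum_w (w \in Wset e X).
  rewrite exchange_big /= !big_distrr /=; apply: eq_bigr => w _.
  case wW: (w \in Wset e X); last by rewrite big1 ?muln0.
  rewrite muln1; move: wW; rewrite inE degInE => /eqP <-; congr (2 * _).
  by apply: eq_bigr => x _; rewrite es.
move=> x xX; rewrite Hc //.
have : #|X| * (2 * s) = #|X| * \sum_w (w \in Wset e X) by rewrite -dc2 dc; lia.
by move/eqP; rewrite eqn_pmul2l // => /eqP.
Qed.

Lemma a11_pos (T : finType) (e : rel T) (X : {set T}) x v :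
  (forall x, x \in X -> 2 * \sum_w ((w \in Wset e X) && e x w) = \sum_w (w \in Wset e X)) ->
  x \in X -> v \in X -> (exists2 w, w \in Wset e X & e x w == e v w) ->
  exists w, e x w && e v w && (w \in Wset e X).
Proof.
move=> L1 xX vX [w0 w0W Hw0].
have := sum_nn (Wset e X) (e x) (e v).
rewrite card_sumb !sum_inb => Hnn; have Lx := L1 x xX; have Lv := L1 v vX.
have : 0 < \sum_w ((w \in Wset e X) && (e x w && e v w)).
  case ex: (e x w0).
  - apply: (leq_trans _ (sum_ge_term _ (isT : predT w0))).
    by rewrite w0W ex -(eqP Hw0) ex.
  - have : 0 < \sum_w ((w \in Wset e X) && (~~ e x w && ~~ e v w)).
      apply: (leq_trans _ (sum_ge_term _ (isT : predT w0))).
      by rewrite w0W ex -(eqP Hw0) ex.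
    lia.
move/exists_of_sum => [w /andP[wW /andP[a b]]]; exists w; by rewrite a b wW.
Qed.

Lemma kap_lt (T : finType) (e : rel T) (X : {set T}) x v :
  (exists w, e x w && e v w && (w \in Wset e X)) -> kap e X x v < deg e v.
Proof.
move=> [w1 /andP[/andP[a b] c]]; rewrite /kap degE (bigD1 w1) //= [X in _ < X](bigD1 w1) //=.
rewrite a b c /= add0n add1n ltnS; apply: leq_sum => w _.
by case: (e x w (+) _); case: (e v w).
Qed.

Definition caseA (T : finType) (e : rel T) (X : {set T}) : Prop :=
  (forall x1 x2, x1 \in X -> x2 \in X -> ~~ e x1 x2)
  /\ (1 < #|half_set e X|)%N
  /\ (forall x1 x2, x1 \in X -> x2 \in X -> x1 != x2 ->
        exists y, (y \in half_set e X) && (e x1 y == e x2 y)).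

Definition caseB (T : finType) (e : rel T) (X : {set T}) : Prop :=
  (forall x, x \in X -> (2 * degIn e X x)%N = #|X|)
  /\ (forall x1 x2, x1 \in X -> x2 \in X -> x1 != x2 ->
        exists z, (z \in X :|: half_set e X) && (e x1 z == e x2 z)).

Lemma half_W (T : finType) (e : rel T) (X : {set T}) y :
  y \in half_set e X -> y \in Wset e X.
Proof. by rewrite !inE => /andP[]. Qed.

Lemma degIn0A (T : finType) (e : rel T) (X : {set T}) w :
  (forall x1 x2, x1 \in X -> x2 \in X -> ~~ e x1 x2) -> w \in X -> degIn e X w = 0.
Proof. by move=> Ha wX; rewrite degInE big1 // => x xX; rewrite (negbTE (Ha _ _ wX xX)). Qed.

Lemma TRI_of (T : finType) (e : rel T) (X : {set T}) :
  gm_switching_set e X -> caseA e X \/ caseB e X ->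
  forall w, [|| degIn e X w == 0, (2 * degIn e X w == #|X|)%N | degIn e X w == #|X|].
Proof.
move=> [_ HX] Hc w; case wX: (w \in X); last by apply: HX; rewrite wX.
case: Hc => [[Ha _]|[Hb _]].
  by rewrite degIn0A.
by rewrite Hb // eqxx orbT.
Qed.

Lemma WA (T : finType) (e : rel T) (X : {set T}) w :
  (0 < #|X|)%N -> caseA e X -> w \in Wset e X -> w \notin X.
Proof.
move=> Xp [Ha _] wW; apply/negP => wX; move: wW; rewrite inE degIn0A //.
by rewrite muln0 => /eqP E; rewrite -E in Xp.
Qed.

Lemma WB (T : finType) (e : rel T) (X : {set T}) w :
  caseB e X -> w \in X -> w \in Wset e X.
Proof. by move=> [Hb _] wX; rewrite inE Hb. Qed.

Lemma witness_of (T : finType) (e : rel T) (X : {set T}) :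
  caseA e X \/ caseB e X ->
  forall x v, x \in X -> v \in X -> exists2 w, w \in Wset e X & e x w == e v w.
Proof.
move=> Hc x v xX vX; case: (eqVneq x v) => [<-|xv].
  case: Hc => [[_ [H1 _]]|Hb].
    have [y yH] : exists y, y \in half_set e X by apply/card_gt0P; apply: ltnW.
    by exists y; [apply: half_W|].
  by exists x; [apply: WB|].
case: Hc => [[_ [_ H]]|Hb].
  by have [y /andP[yH Ey]] := H x v xX vX xv; exists y => //; apply: half_W.
have [z /andP[zU Ez]] := Hb.2 x v xX vX xv; exists z => //.
by move: zU; rewrite in_setU => /orP[/(WB Hb)|/half_W].
Qed.

Lemma L2_of (T : finType) (e : rel T) (X : {set T}) :
  symmetric e -> (0 < #|X|)%N -> caseA e X \/ caseB e X ->
  (forall x, x \in X -> 2 * \sum_w ((w \in Wset e X) && e x w) = \sum_w (w \in Wset e X)) ->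
  forall x, x \in X -> 2 * \sum_w ((w \notin X) && (w \in Wset e X) && e x w) =
                        \sum_w ((w \notin X) && (w \in Wset e X)).
Proof.
move=> es Xp Hc L1 x xX; case: (Hc) => [HA|HB].
  have E w : (w \notin X) && (w \in Wset e X) = (w \in Wset e X).
    by case wW: (w \in Wset e X); rewrite ?andbF // (WA Xp HA wW).
  have -> : \sum_w ((w \notin X) && (w \in Wset e X) && e x w) =
            \sum_w ((w \in Wset e X) && e x w) by apply: eq_bigr => w _; rewrite E.
  have -> : \sum_w ((w \notin X) && (w \in Wset e X) : nat) =
            \sum_w (w \in Wset e X : nat) by apply: eq_bigr => w _; rewrite E.
  exact: L1.
have := L1 x xX.
rewrite [X in 2 * X = _ -> _](bigID (fun w => w \in X)) [X in _ = X -> _](bigID (fun w => w \in X)) /=.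
have -> : \sum_(w | w \in X) ((w \in Wset e X) && e x w) = degIn e X x.
  by rewrite degInE; apply: eq_bigr => w wX; rewrite (WB HB wX) es.
have -> : \sum_(w | w \in X) (w \in Wset e X : nat) = #|X|.
  by rewrite -sum1_card; apply: eq_bigr => w wX; rewrite (WB HB wX).
have -> : \sum_(w | w \notin X) ((w \in Wset e X) && e x w) =
          \sum_w ((w \notin X) && (w \in Wset e X) && e x w).
  by rewrite [LHS]big_mkcond /=; apply: eq_bigr => w _; case: (w \in X).
have -> : \sum_(w | w \notin X) (w \in Wset e X : nat) =
          \sum_w ((w \notin X) && (w \in Wset e X)).
  by rewrite [LHS]big_mkcond /=; apply: eq_bigr => w _; case: (w \in X).
have := HB.1 x xX. lia.
Qed.

Lemma ID_of (T : finType) (e : rel T) (X : {set T}) :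
  (0 < #|X|)%N -> caseA e X \/ caseB e X ->
  (forall w, [|| degIn e X w == 0, (2 * degIn e X w == #|X|)%N | degIn e X w == #|X|]) ->
  forall x v, x \in X ->
     \sum_(w in X) (e x w && (e v w (+) (v \in Wset e X))) =
     \sum_(w in X) ((e x w (+) (w \in Wset e X)) && e v w).
Proof.
move=> Xp Hc TRI x v xX; case: (Hc) => [HA|HB].
  rewrite !big1 // => w wX.
    have wW : (w \in Wset e X) = false by apply/negP => /(WA Xp HA); rewrite wX.
    by rewrite (negbTE (HA.1 x w xX wX)) wW.
  by rewrite (negbTE (HA.1 x w xX wX)).
have -> : \sum_(w in X) ((e x w (+) (w \in Wset e X)) && e v w) =
          \sum_(w in X) (~~ e x w && e v w).
  by apply: eq_bigr => w wX; rewrite (WB HB wX) addbT.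
have Dx := HB.1 x xX; rewrite degInE in Dx.
case vW: (v \in Wset e X).
  have Dv : 2 * \sum_(w in X) e v w = #|X| by move: vW; rewrite inE degInE => /eqP.
  have -> : \sum_(w in X) (e x w && (e v w (+) true)) = \sum_(w in X) (e x w && ~~ e v w).
    by apply: eq_bigr => w _; rewrite addbT.
  have E1 := sum_andC X (e x) (e v).
  have E2 := sum_andC X (e v) (e x).
  have E4 : \sum_(w in X) (e v w && e x w) = \sum_(w in X) (e x w && e v w).
    by apply: eq_bigr => w _; rewrite andbC.
  have E3 : \sum_(w in X) (e v w && ~~ e x w) = \sum_(w in X) (~~ e x w && e v w).
    by apply: eq_bigr => w _; rewrite andbC.
  lia.
have -> : \sum_(w in X) (e x w && (e v w (+) false)) = \sum_(w in X) (e x w && e v w).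
  by apply: eq_bigr => w _; rewrite addbF.
move: vW; rewrite inE => vW.
case/or3P: (TRI v) => [/eqP H| H |/eqP H]; last first.
- have F : forall w, w \in X -> e v w by apply: sum_full; rewrite -degInE.
  have -> : \sum_(w in X) (e x w && e v w) = \sum_(w in X) e x w.
    by apply: eq_bigr => w wX; rewrite F // andbT.
  have -> : \sum_(w in X) (~~ e x w && e v w) = \sum_(w in X) ~~ e x w.
    by apply: eq_bigr => w wX; rewrite F // andbT.
  have := sum_negb X (e x). lia.
- by rewrite H in vW.
have F : forall w, w \in X -> ~~ e v w by apply: sum_zero; rewrite -degInE.
by rewrite !big1 // => w wX; rewrite (negbTE (F w wX)) andbF.
Qed.

Lemma KB_of (T : finType) (e : rel T) (X : {set T}) :
  caseA e X \/ caseB e X ->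
  (forall x, x \in X -> 2 * \sum_w ((w \in Wset e X) && e x w) = \sum_w (w \in Wset e X)) ->
  forall x v, x \in X -> v \in X -> kap e X x v < deg e v.
Proof.
move=> Hc L1 x v xX vX; apply: kap_lt; apply: a11_pos => //.
exact: witness_of.
Qed.


Module Cosp.
Import GRing.Theory Num.Theory.
Local Open Scope ring_scope.

Lemma char_poly_invol (R : comNzRingType) n (Q A : 'M[R]_n) :
  Q *m Q = 1%:M -> char_poly (Q *m A *m Q) = char_poly A.
Proof.
move=> QQ; rewrite /char_poly /char_poly_mx.
set Qp := map_mx polyC Q.
have QpQp : Qp *m Qp = 1%:M by rewrite -map_mxM QQ map_scalar_mx /= polyC1.
have -> : ('X%:M - map_mx polyC (Q *m A *m Q)) = Qp *m ('X%:M - map_mx polyC A) *m Qp.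
  rewrite !map_mxM -/Qp mulmxBr mulmxBl; congr (_ - _).
  by rewrite mul_mx_scalar -scalemxAl QpQp -mul_scalar_mx mulmx1.
rewrite !det_mulmx mulrC mulrA -det_mulmx.
by rewrite [Qp *m Qp]QpQp det1 mul1r.
Qed.

Definition mxf (T : finType) (F : T -> T -> algC) : 'M[algC]_#|T| :=
  \matrix_(a, b) F (enum_val a) (enum_val b).

Lemma mxf_mul (T : finType) (F G : T -> T -> algC) :
  mxf F *m mxf G = mxf (fun p q => \sum_r F p r * G r q).
Proof.
apply/matrixP => a b; rewrite !mxE.
have := big_enum_val (R:=algC) (op:=+%R) (idx:=0) (I:=T) (A:=pred_of_simpl (@predT T)) (fun r => F (enum_val a) r * G r (enum_val b)).
move=> H.
transitivity (\sum_(j < #|T|) F (enum_val a) (enum_val j) * G (enum_val j) (enum_val b)).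
  by apply: eq_bigr => j _; rewrite !mxE.
by apply: (etrans (esym H)); apply: eq_big.
Qed.

Lemma sum_delta (T : finType) (p : T) (F : T -> algC) :
  \sum_r (((p == r) : nat)%:R * F r) = F p.
Proof.
rewrite (bigD1 p) //= eqxx mul1r big1 ?addr0 // => r /negbTE.
by rewrite eq_sym => ->; rewrite mul0r.
Qed.

Lemma sum_deltar (T : finType) (p : T) (F : T -> algC) :
  \sum_r (F r * ((r == p) : nat)%:R) = F p.
Proof.
rewrite (bigD1 p) //= eqxx mulr1 big1 ?addr0 // => r /negbTE ->.
by rewrite mulr0.
Qed.

Definition Qf (T : finType) (S : {set T}) (p r : T) : algC :=
  if p \in S then (if r \in S then 2 / (#|S|%:R) else 0) - ((p == r) : nat)%:R
  else ((p == r) : nat)%:R.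

Lemma sum_ifS (T : finType) (S : {set T}) (c : algC) (G : T -> algC) :
  \sum_r ((if r \in S then c else 0) * G r) = c * \sum_(r in S) G r.
Proof.
rewrite mulr_sumr [RHS]big_mkcond /=; apply: eq_bigr => r _.
by case: (r \in S); rewrite ?mul0r.
Qed.

Lemma sumQl_in (T : finType) (S : {set T}) p (G : T -> algC) : p \in S ->
  \sum_r (Qf S p r * G r) = 2 / (#|S|%:R) * \sum_(r in S) G r - G p.
Proof.
move=> pS; rewrite /Qf pS.
under eq_bigr => r _ do rewrite mulrBl.
by rewrite sumrB sum_ifS sum_delta.
Qed.

Lemma sumQl_out (T : finType) (S : {set T}) p (G : T -> algC) : p \notin S ->
  \sum_r (Qf S p r * G r) = G p.
Proof. by move=> pS; rewrite /Qf (negbTE pS) sum_delta. Qed.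

Lemma sumQr_in (T : finType) (S : {set T}) q (G : T -> algC) : q \in S ->
  \sum_r (G r * Qf S r q) = 2 / (#|S|%:R) * \sum_(r in S) G r - G q.
Proof.
move=> qS.
transitivity (\sum_r ((if r \in S then 2 / (#|S|%:R) else 0) * G r - G r * ((r == q) : nat)%:R)); last first.
  by rewrite sumrB sum_ifS sum_deltar.
apply: eq_bigr => r _; rewrite /Qf; case rS: (r \in S).
  by rewrite qS; ring.
case: eqP => [E|]; first by rewrite E qS in rS.
by rewrite mulr0 mul0r subr0.
Qed.

Lemma sumQr_out (T : finType) (S : {set T}) q (G : T -> algC) : q \notin S ->
  \sum_r (G r * Qf S r q) = G q.
Proof.
move=> qS; rewrite -[RHS](sum_deltar q G); apply: eq_bigr => r _.
rewrite /Qf; case rS: (r \in S) => //.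
case: eqP => [E|]; first by rewrite -E rS in qS.
by rewrite (negbTE qS) subr0 mulr0.
Qed.

Lemma half_val (n d : nat) : (2 * d)%N = n -> (0 < n)%N -> 2 / (n%:R : algC) * d%:R = 1.
Proof.
move=> <- Hn; rewrite natrM.
have dn0 : (d%:R : algC) != 0 by rewrite pnatr_eq0; apply/eqP => d0; rewrite d0 in Hn.
by field.
Qed.

Lemma full_val (n : nat) : (0 < n)%N -> 2 / (n%:R : algC) * n%:R = 2.
Proof. by move=> Hn; rewrite divfK // pnatr_eq0 -lt0n. Qed.

Lemma sumS_delta (T : finType) (S : {set T}) (q : T) :
  \sum_(r in S) (((r == q) : nat)%:R : algC) = ((q \in S) : nat)%:R.
Proof.
rewrite big_mkcond /= (bigD1 q) //= eqxx big1 ?addr0.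
  by case: (q \in S).
by move=> r /negbTE ->; case: (r \in S).
Qed.

Lemma natr_sumS (T : finType) (S : {set T}) (b : pred T) :
  \sum_(r in S) (((b r) : nat)%:R : algC) = (\sum_(r in S) (b r : nat))%:R.
Proof. by rewrite natr_sum. Qed.

Lemma boolR (b : bool) : (((~~ b) : nat)%:R : algC) = 1 - (b : nat)%:R.
Proof. by case: b; rewrite /= ?subrr ?subr0. Qed.

Lemma QQ_pt (T : finType) (S : {set T}) p q : (0 < #|S|)%N ->
  \sum_r (Qf S p r * Qf S r q) = ((p == q) : nat)%:R.
Proof.
move=> Hn.
case pS: (p \in S); last by rewrite sumQl_out ?pS // /Qf pS.
rewrite sumQl_in //.
case qS: (q \in S).
- have -> : \sum_(r in S) Qf S r q = 2 / (#|S|%:R) * #|S|%:R - 1.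
    transitivity (\sum_(r in S) (2 / (#|S|%:R) - ((r == q) : nat)%:R : algC)).
      by apply: eq_bigr => r rS; rewrite /Qf rS qS.
    by rewrite sumrB sumS_delta qS sumr_const /= mulr1n mulr_natr.
  rewrite full_val // /Qf pS qS; ring.
- have -> : \sum_(r in S) Qf S r q = 0.
    rewrite big1 // => r rS; rewrite /Qf rS qS.
    by case: eqP => [E|]; [rewrite E qS in rS | rewrite subrr].
  rewrite /Qf pS qS.
  by case: eqP => [E|]; [rewrite E qS in pS | rewrite mulr0 !subrr].
Qed.

Lemma gm_cospectral (T : finType) (e : rel T) (S : {set T}) :
  symmetric e -> gm_switching_set e S -> (0 < #|S|)%N ->
  cospectral e (gm_switch e S).
Proof.
move=> esym [[k Hk] HS] Hn.
set Q := mxf (Qf S).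
have QQ : Q *m Q = 1%:M.
  rewrite /Q mxf_mul; apply/matrixP => a b; rewrite !mxE QQ_pt //.
  by rewrite (inj_eq enum_val_inj).
set A := mxf (fun p q => ((e p q) : nat)%:R).
set A' := mxf (fun p q => ((gm_switch e S p q) : nat)%:R).
have AQ : A *m Q = Q *m A'.
  rewrite /A /A' /Q !mxf_mul; apply/matrixP => a b; rewrite !mxE.
  move: (enum_val a) (enum_val b) => p q.
  have degR v : \sum_(r in S) ((e v r : nat)%:R : algC) = (degIn e S v)%:R.
    by rewrite natr_sumS degInE.
  have Hout v : v \notin S -> v \notin half_set e S ->
     (forall z, z \in S -> ~~ e v z) \/ (forall z, z \in S -> e v z).
    move=> vS vH; move: (HS v vS); rewrite inE vS /= in vH.
    case/or3P => [/eqP H| H |/eqP H]; first by left; apply: sum_zero; rewrite -degInE.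
      by rewrite H in vH.
    by right; apply: sum_full; rewrite -degInE.
  case pS: (p \in S); case qS: (q \in S).
  + rewrite sumQr_in // sumQl_in // degR.
    have -> : \sum_(r in S) ((gm_switch e S r q : nat)%:R : algC) = (degIn e S q)%:R.
      rewrite -degR; apply: eq_bigr => r rS; rewrite sw_in //.
      have -> : (q \in half_set e S) = false by apply/negP => /half_notin; rewrite qS.
      by rewrite addbF esym.
    rewrite sw_in // (Hk p pS) (Hk q qS).
    have -> : (q \in half_set e S) = false by apply/negP => /half_notin; rewrite qS.
    by rewrite addbF.
  + rewrite sumQr_out ?qS // sumQl_in //.
    have qS' : q \notin S by rewrite qS.
    rewrite (sw_in _ _ pS).
    have -> : \sum_(r in S) ((gm_switch e S r q : nat)%:R : algC) =
              \sum_(r in S) ((e q r (+) (q \in half_set e S) : nat)%:R).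
      by apply: eq_bigr => r rS; rewrite sw_in // esym.
    rewrite natr_sumS (esym p q).
    case hq: (q \in half_set e S).
    * have Hd : (2 * degIn e S q)%N = #|S| by move: hq; rewrite inE => /andP[_ /eqP].
      have := sum_negb S (e q); rewrite -degInE => Hs.
      have -> : \sum_(r in S) (e q r (+) true : nat) = degIn e S q.
        under eq_bigr => r _ do rewrite addbT. apply/eqP; rewrite -(eqn_add2l (degIn e S q)) Hs; apply/eqP; lia.
      by rewrite half_val // addbT boolR; ring.
    * under eq_bigr => r _ do rewrite addbF.
      rewrite addbF -degInE.
      case: (Hout q qS' (negbT hq)) => Hq.
      - rewrite (negbTE (Hq p pS)).
        have -> : degIn e S q = 0%N by rewrite degInE big1 // => r /Hq /negbTE ->.
        by rewrite mulr0 subr0.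
      - rewrite (Hq p pS).
        have -> : degIn e S q = #|S| by rewrite degInE -sum1_card; apply: eq_bigr => r /Hq ->.
        by rewrite full_val //=; ring.
  + rewrite sumQr_in // sumQl_out ?pS // degR.
    have pS' : p \notin S by rewrite pS.
    rewrite (sw_out _ pS' qS).
    case hp: (p \in half_set e S).
    * have Hd : (2 * degIn e S p)%N = #|S| by move: hp; rewrite inE => /andP[_ /eqP].
      by rewrite half_val // addbT boolR.
    * rewrite addbF.
      case: (Hout p pS' (negbT hp)) => Hp.
      - rewrite (negbTE (Hp q qS)).
        have -> : degIn e S p = 0%N by rewrite degInE big1 // => r /Hp /negbTE ->.
        by rewrite mulr0 subr0.
      - rewrite (Hp q qS).
        have -> : degIn e S p = #|S| by rewrite degInE -sum1_card; apply: eq_bigr => r /Hp ->.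
        by rewrite full_val //=; ring.
  + rewrite sumQr_out ?qS // sumQl_out ?pS //.
    by rewrite sw_outout ?pS ?qS.
have A'E : A' = Q *m A *m Q.
  by rewrite -mulmxA AQ mulmxA QQ mul1mx.
by rewrite /cospectral; change (char_poly A = char_poly A'); rewrite A'E char_poly_invol.
Qed.

End Cosp.


Lemma prodg_sym (U T : finType) (h : rel U) (e : rel T) :
  symmetric h -> symmetric e -> symmetric (prodg h e).
Proof. by move=> hs es p q; rewrite /prodg hs es. Qed.

Unset Implicit Arguments.

Theorem theorem4p1 (T : finType) (e : rel T) (X : {set T})
  (Hsimple : simple_graph e)
  (HX : gm_switching_set e X)
  (HXne : (0 < #|X|)%N)
  (Hdeg : forall x1 x2, x1 \in X -> x2 \in X -> deg e x1 = deg e x2)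
  (HLambda : perm_eq (Lambda_list e X) (Lambda_list (gm_switch e X) X))
  (Hcase :
     ( (forall x1 x2, x1 \in X -> x2 \in X -> ~~ e x1 x2)
       /\ (1 < #|half_set e X|)%N
       /\ (forall x1 x2, x1 \in X -> x2 \in X -> x1 != x2 ->
             exists y, (y \in half_set e X) && (e x1 y == e x2 y)) )
     \/
     ( (forall x, x \in X -> (2 * degIn e X x)%N = #|X|)
       /\ (forall x1 x2, x1 \in X -> x2 \in X -> x1 != x2 ->
             exists z, (z \in X :|: half_set e X) && (e x1 z == e x2 z)) ))
  (U : finType) (eH : rel U) (HHsimple : simple_graph eH) (i : U) :
  let XX := setX [set i] X in
  gm_switching_set (tensor_graph eH e) XX /\
  gm_switching_set (strong_tensor_graph eH e) XX /\
  ((0 < deg eH i)%N ->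
     cospectral (strong_tensor_graph eH e)
                (gm_switch (strong_tensor_graph eH e) XX) /\
     ~ isomorphic (strong_tensor_graph eH e)
                  (gm_switch (strong_tensor_graph eH e) XX)) /\
  ((exists j, eH i j && (1 < deg eH j)%N) ->
     cospectral (tensor_graph eH e) (gm_switch (tensor_graph eH e) XX) /\
     ~ isomorphic (tensor_graph eH e) (gm_switch (tensor_graph eH e) XX)).
Proof.
cbv zeta.
have [es eirr] := Hsimple; have [hs hirr] := HHsimple.
have Hc : caseA e X \/ caseB e X := Hcase.
have TRI := TRI_of HX Hc.
have Kreg := HX.1.
have L1 := W_count es HXne TRI Hdeg.
have L2 := L2_of es HXne Hc L1.
have ID := ID_of HXne Hc TRI.
have KB := KB_of Hc L1.
set h2 := fun a b : U => (a == b) || eH a b.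
have h2s : symmetric h2 by move=> a b; rewrite /h2 eq_sym hs.
have -> : tensor_graph eH e = prodg eH e by [].
have -> : strong_tensor_graph eH e = prodg h2 e by [].
have Sp : (0 < #|setX [set i] X|)%N by rewrite cardS.
split; first exact: gmP.
split; first exact: gmP.
split.
  move=> dpos; split.
    by apply: Cosp.gm_cospectral => //; [apply: prodg_sym | apply: gmP].
  apply: prod_noniso => //.
  move: dpos; rewrite degE => /exists_of_sum [j hij].
  exists j; apply/andP; split.
    by apply/negP => /eqP E; rewrite E hirr in hij.
  apply: (leq_trans _ (sum_ge_term _ (isT : predT j))).
  by rewrite /h2 /= hij eqxx orbT.
move=> [j /andP[hij dj]]; split.
  by apply: Cosp.gm_cospectral => //; [apply: prodg_sym | apply: gmP].
apply: prod_noniso => //.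
have : (0 < \sum_(b | b != i) eH j b)%N.
  move: dj; rewrite degE (bigD1 i) //=.
  case: (eH j i) => /=; lia.
rewrite big_mkcond /=.
have -> : \sum_b (if b != i then (eH j b : nat) else 0) = \sum_b ((b != i) && eH j b).
  by apply: eq_bigr => b _; case: (b != i).
move=> /exists_of_sum [b /andP[bi hjb]].
exists b; rewrite bi /=.
apply: (leq_trans _ (sum_ge_term _ (isT : predT j))).
by rewrite hij (hs b j) hjb.
Qed.
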